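(* Let $q$ be a prime power, let $\mu\ge 2$ be an integer, and put $\delta=1/\sqrt{(q+1)\ln(q+1)}$. Then \[ \ell_\mu(2,3,q)\le 2D\sqrt{(q+1)\ln(q+1)}+2 \] holds in each of the following cases: (a) $D=2.4$, if $\mu=2$ and $q\ge 97$; (b) $D=2.6$, if $\mu=3$ and $q\ge 181$; (c) $D=2.8$, if $\mu=4$ and $q\ge 125$; (d) $D=\mu+1$, if $\mu\le\sqrt{q}$ and $q\ge 4$; (e) $D=2\mu-1$, if $\mu\le \frac12\big((1-\delta)q-\delta+1\big)+1$ and $q\ge 3$.
   Context: A linear code $C$ over $\mathbb{F}_q$ with covering radius $R$ is an $(R,\mu)$-multiple covering of the farthest-off points ($(R,\mu)$-MCF code) if for every vector $x\in\mathbb{F}_q^n$ at Hamming distance exactly $R$ from $C$, the number of codewords of $C$ at distance $R$ from $x$ is at least $\mu$. The $\mu$-length function $\ell_\mu(R,r,q)$ is the smallest length $n$ of a linear $(R,\mu)$-MCF code over $\mathbb{F}_q$ of length $n$, codimension $r$ and covering radius $R$. Here $\ln$ is the natural logarithm. *)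

(* Defs.v *)
From HB Require Import structures.
From mathcomp Require Import all_boot all_order all_algebra.
From Stdlib Require Import Reals.
Set Implicit Arguments. Unset Strict Implicit. Unset Printing Implicit Defensive.

Section Codes.
Variables (F : finFieldType) (n : nat).

Definition hdist (x y : 'rV[F]_n) : nat := #|[set i : 'I_n | x ord0 i != y ord0 i]|.

(* d(x, C) = min over codewords c of C of d(x, c)  (0 \in C, so n is a safe default) *)
Definition dist_code (C : {vspace 'rV[F]_n}) (x : 'rV[F]_n) : nat :=
  \big[minn/n]_(c : 'rV[F]_n | c \in C) hdist x c.

Definition cov_radius (C : {vspace 'rV[F]_n}) : nat :=
  \max_(x : 'rV[F]_n) dist_code C x.

Definition is_MCF (C : {vspace 'rV[F]_n}) (R mu : nat) : Prop :=
  cov_radius C = R /\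
  forall x : 'rV[F]_n, dist_code C x = R ->
    (mu <= #|[set c : 'rV[F]_n | (c \in C) && (hdist x c == R)]|)%N.

Definition has_codim (C : {vspace 'rV[F]_n}) (r : nat) : Prop :=
  (r <= n)%N /\ \dim C = (n - r)%N.
End Codes.

(* the statement "ell_mu(R,r,q) <= b" for the field F of order q:
   some linear (R,mu)-MCF code over F of codimension r, covering radius R
   has length n <= b (equivalent to: the least such length is <= b) *)
Definition ell_mu_le (F : finFieldType) (mu Rad r : nat) (b : R) : Prop :=
  exists n : nat, (INR n <= b)%R /\
    exists C : {vspace 'rV[F]_n}, has_codim C r /\ is_MCF C Rad mu.

Definition mcf_bound (D : R) (q : nat) : R :=
  (2 * D * sqrt (INR (q + 1) * ln (INR (q + 1))) + 2)%R.

Definition mcf_delta (q : nat) : R := (/ sqrt (INR (q + 1) * ln (INR (q + 1))))%R.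

(* Main.v *)
Require Import Defs.
From mathcomp Require Import all_boot all_order all_algebra.
From Stdlib Require Import Reals.
From mathcomp Require ring.
From mathcomp Require Import zify.
From Stdlib Require Import Lra Lia Psatz.
From Stdlib Require Znat.
Module Code.
Import ring.
Set Implicit Arguments. Unset Strict Implicit. Unset Printing Implicit Defensive.
Import GRing.Theory.
Local Open Scope ring_scope.
Local Delimit Scope ring_scope with ring.

Section Engine.
Variable F : finFieldType.

Definition o0 : 'I_3 := @Ordinal 3 0 isT.
Definition o1 : 'I_3 := @Ordinal 3 1 isT.
Definition o2 : 'I_3 := @Ordinal 3 2 isT.

Definition row3 (a b c : F) : 'rV[F]_3 := \row_(i < 3) nth 0 [:: a; b; c] i.

Lemma row3E (v : 'rV[F]_3) : v = row3 (v 0 o0) (v 0 o1) (v 0 o2).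
Proof.
apply/rowP => i; rewrite mxE.
case: i => [[|[|[|//]]]] Hi /=.
- by congr (v _ _); apply/val_inj.
- by congr (v _ _); apply/val_inj.
- by congr (v _ _); apply/val_inj.
Qed.

Lemma row3_0 a b c : row3 a b c 0 o0 = a. Proof. by rewrite mxE. Qed.
Lemma row3_1 a b c : row3 a b c 0 o1 = b. Proof. by rewrite mxE. Qed.
Lemma row3_2 a b c : row3 a b c 0 o2 = c. Proof. by rewrite mxE. Qed.

Lemma row3_lin l m a b c a' b' c' :
  l *: row3 a b c + m *: row3 a' b' c' = row3 (l * a + m * a') (l * b + m * b') (l * c + m * c').
Proof. by apply/rowP => i; rewrite !mxE; case: i => [[|[|[|//]]]] Hi. Qed.

Lemma row3_scale l a b c : l *: row3 a b c = row3 (l * a) (l * b) (l * c).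
Proof. by apply/rowP => i; rewrite !mxE; case: i => [[|[|[|//]]]] Hi. Qed.

Lemma row3_inj a b c a' b' c' : row3 a b c = row3 a' b' c' -> [/\ a = a', b = b' & c = c'].
Proof.
move=> E; split.
- by have := congr1 (fun v : 'rV[F]_3 => v 0 o0) E; rewrite !row3_0.
- by have := congr1 (fun v : 'rV[F]_3 => v 0 o1) E; rewrite !row3_1.
- by have := congr1 (fun v : 'rV[F]_3 => v 0 o2) E; rewrite !row3_2.
Qed.

Definition colv (k : bool * F) : 'rV[F]_3 :=
  if k.1 then row3 1 k.2 0 else row3 0 k.2 1.


Lemma colv_notmult s : s = row3 1 0 1 -> forall l k, s != l *: colv k.
Proof.
move=> -> l [[] v]; rewrite /colv /= row3_scale; apply/eqP => /row3_inj [].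
- by move=> _ _; rewrite mulr0 => /eqP; rewrite oner_eq0.
- by rewrite mulr0 => /eqP; rewrite oner_eq0.
Qed.

Variables (n : nat) (kind : 'I_n -> bool * F).

Definition Hm : 'M[F]_(n, 3) := \matrix_(p < n) colv (kind p).
Definition Cd : {vspace 'rV[F]_n} := lker (linfun (@mulmxr F 1 n 3 Hm)).

Lemma memCd c : (c \in Cd) = (c *m Hm == 0).
Proof. by rewrite memv_ker lfunE. Qed.

Definition wt (e : 'rV[F]_n) : nat := #|[set i | e 0 i != 0]|.

Lemma hdistE x c : hdist x c = wt (x - c).
Proof. by apply: eq_card => i; rewrite !inE !mxE subr_eq0. Qed.

Definition dl (p : 'I_n) : 'rV[F]_n := delta_mx 0 p.

Lemma dlH p : dl p *m Hm = colv (kind p).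
Proof. by rewrite /dl -rowE rowK. Qed.

Definition e2 l m p1 p2 : 'rV[F]_n := l *: dl p1 + m *: dl p2.

Lemma e2H l m p1 p2 : e2 l m p1 p2 *m Hm = l *: colv (kind p1) + m *: colv (kind p2).
Proof. by rewrite /e2 mulmxDl -!scalemxAl !dlH. Qed.

Lemma e2E l m p1 p2 i : e2 l m p1 p2 0 i = l * (i == p1)%:R + m * (i == p2)%:R.
Proof. by rewrite /e2 /dl !mxE eqxx. Qed.

Lemma supp_e2 l m p1 p2 : p1 != p2 -> l != 0 -> m != 0 ->
  [set i | e2 l m p1 p2 0 i != 0] = [set p1; p2].
Proof.
move=> d12 l0 m0; apply/setP => i; rewrite !inE e2E.
have [->|n1] := eqVneq i p1; first by rewrite (negbTE d12) mulr1 mulr0 addr0 l0.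
rewrite mulr0 add0r /=; case: (i == p2); by rewrite ?mulr1 ?mulr0 ?eqxx ?m0.
Qed.

Lemma wt_e2 l m p1 p2 : p1 != p2 -> l != 0 -> m != 0 -> wt (e2 l m p1 p2) = 2%nat.
Proof. by move=> d l0 m0; rewrite /wt supp_e2 // cards2 d. Qed.

Lemma wt_le1 (e : 'rV[F]_n) (p0 : 'I_n) : (wt e <= 1)%nat -> exists l p, e *m Hm = l *: colv (kind p).
Proof.
move=> /card_le1_eqP W.
case: (pickP (fun i => e 0 i != 0)) => [p ep|none].
  exists (e 0 p), p; rewrite -dlH scalemxAl; congr (_ *m _).
  apply/rowP => i; rewrite /dl !mxE eqxx /=.
  have [->|nip] := eqVneq i p; first by rewrite mulr1.
  rewrite mulr0; apply/eqP; apply: contraTT nip => ei.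
  by rewrite negbK; apply/eqP; apply: (W p i); rewrite inE.
exists 0, p0; rewrite scale0r.
have -> : e = 0 by apply/rowP => i; rewrite mxE; apply/eqP; move: (none i) => /= /negbFE.
by rewrite mul0mx.
Qed.

Lemma wt_scale_dl l p : (wt (l *: dl p) <= 1)%nat.
Proof.
rewrite /wt; apply: (@leq_trans #|[set p]|); last by rewrite cards1.
apply: subset_leq_card; apply/subsetP => i.
rewrite !inE /dl !mxE eqxx /=; apply: contraR => /negbTE ->; by rewrite mulr0.
Qed.

Lemma dist_le x c : c \in Cd -> (dist_code Cd x <= hdist x c)%nat.
Proof.
rewrite /dist_code => cC.
have : c \in index_enum 'rV[F]_n by rewrite mem_index_enum.
elim: (index_enum _) => [//|a r IH]; rewrite inE big_cons.
case/orP => [/eqP<-|cr]; first by rewrite cC geq_minl.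
case: ifP => _; last exact: IH.
by rewrite (leq_trans (geq_minr _ _)) // IH.
Qed.

Lemma dist_ge x k : (k <= n)%nat -> (forall c, c \in Cd -> k <= hdist x c)%nat -> (k <= dist_code Cd x)%nat.
Proof.
move=> kn H; rewrite /dist_code; apply: (big_ind (fun v => k <= v)%nat) => //.
by move=> u v ku kv; rewrite leq_min ku kv.
Qed.

Lemma hdist_sub x e : hdist x (x - e) = wt e.
Proof. by rewrite hdistE opprB addrC subrK. Qed.

Lemma mem_sub x e : (x - e \in Cd) = (e *m Hm == x *m Hm).
Proof. by rewrite memCd mulmxBl subr_eq0 eq_sym. Qed.

Variable mu : nat.
Hypothesis Hmu : (0 < mu)%nat.
Hypothesis H1 : forall x y : F, x != 0 ->
  (mu <= #|[set pq : 'I_n * 'I_n | [&& (kind pq.1).1, ~~ (kind pq.2).1 &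
       (x * (kind pq.1).2 + (kind pq.2).2 == y)%ring]]|)%nat.
Hypothesis H2 : exists i0, (kind i0).1 /\
  (mu <= #|[set i | (kind i).1 && ((kind i).2 != (kind i0).2)%R]|)%nat.
Hypothesis H3 : exists j0, ~~ (kind j0).1 /\
  (mu <= #|[set j | ~~ (kind j).1 && ((kind j).2 != (kind j0).2)%R]|)%nat.

Lemma colvA (k : bool * F) : k.1 -> colv k = row3 1 k.2 0.
Proof. by rewrite /colv => ->. Qed.
Lemma colvB (k : bool * F) : ~~ k.1 -> colv k = row3 0 k.2 1.
Proof. by rewrite /colv => /negbTE ->. Qed.

Lemma reps (s : 'rV[F]_3) : (forall l p, s != l *: colv (kind p)) ->
  exists (P : {set 'I_n * 'I_n}) (L M : 'I_n * 'I_n -> F),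
  [/\ (mu <= #|P|)%nat,
      {in P, forall pq, pq.1 != pq.2 /\ L pq *: colv (kind pq.1) + M pq *: colv (kind pq.2) = s} &
      {in P &, forall pq pq', pq.1 = pq'.2 -> pq.2 = pq'.1 -> pq = pq'}].
Proof.
move=> NM; rewrite (row3E s) in NM *.
set x := s 0 o0; set y := s 0 o1; set z := s 0 o2.
have [z0|zn0] := eqVneq z 0.
  have [i0 [Ai0 Hc]] := H2.
  set S := [set i | _] in Hc.
  pose M pq := (y - x * (kind pq.1).2) / ((kind pq.2).2 - (kind pq.1).2).
  exists ((fun i => (i0, i)) @: S), (fun pq => x - M pq), M; split.
  - by rewrite card_imset // => i j [].
  - move=> pq /imsetP [i]; rewrite inE => /andP [Ai ne] -> /=; split.
      by apply: contraNneq ne => <-.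
    rewrite (colvA Ai0) (colvA Ai) row3_lin z0 /M /=.
    have d : (kind i).2 - (kind i0).2 != 0 by rewrite subr_eq0.
    congr row3; field; exact: d.
  - move=> pq pq' /imsetP [i _ ->] /imsetP [j]; rewrite inE => /andP [_ ne] -> /= E.
    by rewrite -E eqxx in ne.
have [x0|xn0] := eqVneq x 0.
  have [j0 [Bj0 Hc]] := H3.
  set S := [set i | _] in Hc.
  pose M pq := (y - z * (kind pq.1).2) / ((kind pq.2).2 - (kind pq.1).2).
  exists ((fun i => (j0, i)) @: S), (fun pq => z - M pq), M; split.
  - by rewrite card_imset // => i j [].
  - move=> pq /imsetP [i]; rewrite inE => /andP [Bi ne] -> /=; split.
      by apply: contraNneq ne => <-.
    rewrite (colvB Bj0) (colvB Bi) row3_lin x0 /M /=.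
    have d : (kind i).2 - (kind j0).2 != 0 by rewrite subr_eq0.
    congr row3; field; exact: d.
  - move=> pq pq' /imsetP [i _ ->] /imsetP [j]; rewrite inE => /andP [_ ne] -> /= E.
    by rewrite -E eqxx in ne.
have := H1 (y / z) (mulf_neq0 xn0 (invr_neq0 zn0)).
set P := [set pq | _] => HP.
exists P, (fun _ => x), (fun _ => z); split => //.
- move=> pq; rewrite inE => /and3P [A B /eqP E]; split.
    by apply: contraNneq B => <-; exact A.
  rewrite (colvA A) (colvB B) row3_lin.
  have Ey : x * (kind pq.1).2 + z * (kind pq.2).2 = y.
    have -> : y = z * (y / z) by field.
    by rewrite -E; field.
  by rewrite Ey !mulr0 !mulr1 addr0 add0r.
- move=> pq pq'; rewrite !inE => /and3P [A _ _] /and3P [_ B _] E _.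
  by rewrite E (negbTE B) in A.
Qed.


Lemma notmult_nz l m (u v s : 'rV[F]_3) : l *: u + m *: v = s ->
  (forall l', s != l' *: u) -> (forall l', s != l' *: v) -> l != 0 /\ m != 0.
Proof.
move=> E NU NV; split; apply/eqP => l0.
- by move: (NV m); rewrite -E l0 scale0r add0r eqxx.
- by move: (NU l); rewrite -E l0 scale0r addr0 eqxx.
Qed.

Lemma mcf_count x : (forall l p, x *m Hm != l *: colv (kind p)) ->
  (mu <= #|[set c | (c \in Cd) && (hdist x c == 2%nat)]|)%nat.
Proof.
move=> NM; have [P [L [M [HP Hin Hsw]]]] := reps NM.
pose phi pq := x - e2 (L pq) (M pq) pq.1 pq.2.
have nz pq : pq \in P -> [/\ pq.1 != pq.2, L pq != 0 & M pq != 0].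
  move=> Pq; have [d E] := Hin pq Pq.
  have [] := notmult_nz E (fun l => NM l pq.1) (fun l => NM l pq.2); by [].
apply: leq_trans HP _; rewrite -(@card_in_imset _ _ phi).
  apply: subset_leq_card; apply/subsetP => c /imsetP [pq Pq ->].
  have [d l0 m0] := nz pq Pq; have [_ E] := Hin pq Pq.
  by rewrite inE mem_sub e2H E eqxx hdist_sub wt_e2.
move=> [a b] [a' b'] Pq Pq' /= E.
have E' : e2 (L (a, b)) (M (a, b)) a b = e2 (L (a', b')) (M (a', b')) a' b'.
  by apply: oppr_inj; apply: (addrI x).
have [d l0 m0] := nz _ Pq; have [d' l0' m0'] := nz _ Pq'.
have S := congr1 (fun e : 'rV[F]_n => [set i | e 0 i != 0]) E'.
rewrite /= !supp_e2 // in S.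
have ha : a \in [set a'; b'] by rewrite -S !inE eqxx.
have hb : b \in [set a'; b'] by rewrite -S !inE eqxx orbT.
move: ha hb; rewrite !inE /= => /orP [/eqP ea|/eqP ea] /orP [/eqP eb|/eqP eb].
- by rewrite ea eb eqxx in d.
- by rewrite ea eb.
- exact: Hsw Pq Pq' ea eb.
- by rewrite ea eb eqxx in d.
Qed.

Lemma surj (s : 'rV[F]_3) : exists e : 'rV[F]_n, e *m Hm = s.
Proof.
case: (boolP [exists l : F, exists p : 'I_n, s == l *: colv (kind p)]).
  move=> /existsP [l /existsP [p /eqP E]].
  by exists (l *: dl p); rewrite -scalemxAl dlH E.
move=> NE.
have NM : forall l p, s != l *: colv (kind p).
  move=> l p; apply: contraNN NE => E; apply/existsP; exists l; apply/existsP; by exists p.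
have [P [L [M [HP Hin _]]]] := reps NM.
have : (0 < #|P|)%nat by apply: leq_trans HP.
move=> /card_gt0P [pq Pq]; have [_ E] := Hin pq Pq.
by exists (e2 (L pq) (M pq) pq.1 pq.2); rewrite e2H.
Qed.


Lemma dist_notmult x : (forall l p, x *m Hm != l *: colv (kind p)) -> (2 <= n)%nat ->
  (2 <= dist_code Cd x)%nat.
Proof.
move=> NM n2; apply: dist_ge => // c cC; rewrite hdistE leqNgt ltnS.
apply/negP => /(wt_le1 (Ordinal n2)) [l [p E]].
move: (NM l p); rewrite -E mulmxBl.
by move: cC; rewrite memCd => /eqP ->; rewrite subr0 eqxx.
Qed.

Lemma mult_dist x l p : x *m Hm = l *: colv (kind p) -> (dist_code Cd x <= 1)%nat.
Proof.
move=> E; apply: leq_trans (dist_le x (c := x - l *: dl p) _) _.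
  by rewrite mem_sub -scalemxAl dlH E.
by rewrite hdist_sub wt_scale_dl.
Qed.

Lemma dist_le2 x : (dist_code Cd x <= 2)%nat.
Proof.
case: (boolP [exists l : F, exists p : 'I_n, x *m Hm == l *: colv (kind p)]).
  move=> /existsP [l /existsP [p /eqP E]].
  by apply: leq_trans (mult_dist E) _.
move=> NE.
have NM : forall l p, x *m Hm != l *: colv (kind p).
  move=> l p; apply: contraNN NE => E; apply/existsP; exists l; apply/existsP; by exists p.
have := mcf_count NM => /(leq_trans Hmu) /card_gt0P [c]; rewrite inE => /andP [cC /eqP h].
by rewrite -h dist_le.
Qed.

Theorem engine : (3 <= n)%nat -> has_codim Cd 3 /\ is_MCF Cd 2 mu.
Proof.
move=> n3; have n2 : (2 <= n)%nat by apply: leq_trans n3.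
split.
  split => //.
  have Himg : (limg (linfun (@mulmxr F 1 n 3 Hm)) = fullv)%VS.
    apply/vspaceP => w. rewrite memvf; have [e E] := surj w; rewrite -E.
    by have := memv_img (linfun (@mulmxr F 1 n 3 Hm)) (memvf e); rewrite lfunE.
  have := limg_ker_dim (linfun (@mulmxr F 1 n 3 Hm)) fullv.
  rewrite capfv Himg !dimvf !dim_matrix !mul1r => E.
  have E' : (\dim Cd + 3 = n)%nat := E.
  move: E'; set d := \dim Cd; lia.
split.
  apply/eqP; rewrite eqn_leq; apply/andP; split.
    by apply/bigmax_leqP => x _; exact: dist_le2.
  have [e E] := surj (row3 1 0 1).
  rewrite /cov_radius; apply: (@leq_trans (dist_code Cd e)).
    apply: dist_notmult => // l p; rewrite E; exact: colv_notmult.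
  exact: (@leq_bigmax _ (fun x => dist_code Cd x) e).
move=> x dx; apply: mcf_count => l p; apply/eqP => E.
by have := mult_dist E; rewrite dx.
Qed.

End Engine.


Section Transfer.
Variables (F : finFieldType) (TA TB : finType) (fa : TA -> F) (fb : TB -> F) (mu : nat).
Local Notation T := (TA + TB)%type.

Definition kindT (p : 'I_#|{: T}|) : bool * F :=
  match enum_val p with inl i => (true, fa i) | inr j => (false, fb j) end.

Lemma kindT_l i : kindT (enum_rank (inl i : T)) = (true, fa i).
Proof. by rewrite /kindT enum_rankK. Qed.
Lemma kindT_r j : kindT (enum_rank (inr j : T)) = (false, fb j).
Proof. by rewrite /kindT enum_rankK. Qed.

Hypothesis Hmu : (0 < mu)%nat.
Hypothesis G1 : forall x y : F, x != 0 ->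
  (mu <= #|[set ij : TA * TB | (x * fa ij.1 + fb ij.2 == y)%ring]|)%nat.
Hypothesis G2 : exists i0 : TA, (mu <= #|[set i | fa i != fa i0]|)%nat.
Hypothesis G3 : exists j0 : TB, (mu <= #|[set j | fb j != fb j0]|)%nat.

Lemma transfer_code : (3 <= #|{: T}|)%nat ->
  exists C : {vspace 'rV[F]_#|{: T}|}, has_codim C 3 /\ is_MCF C 2 mu.
Proof.
move=> n3; exists (Cd kindT); apply: engine => //.
- move=> x y x0; apply: leq_trans (G1 y x0) _.
  pose g (ij : TA * TB) := (enum_rank (inl ij.1 : T), enum_rank (inr ij.2 : T)).
  rewrite -(@card_imset _ _ g); last first.
    by move=> [i j] [i' j'] [] /enum_rank_inj [->] /enum_rank_inj [->].
  apply: subset_leq_card; apply/subsetP => pq /imsetP [[i j]]; rewrite !inE /= => E ->.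
  by rewrite /g /= kindT_l kindT_r /=.
- have [i0 Hc] := G2; exists (enum_rank (inl i0 : T)); rewrite kindT_l; split => //.
  apply: leq_trans Hc _; rewrite -(@card_imset _ _ (fun i => enum_rank (inl i : T))); last first.
    by move=> i i' /enum_rank_inj [].
  apply: subset_leq_card; apply/subsetP => p /imsetP [i]; rewrite !inE => E ->.
  by rewrite kindT_l.
- have [j0 Hc] := G3; exists (enum_rank (inr j0 : T)); rewrite kindT_r; split => //.
  apply: leq_trans Hc _; rewrite -(@card_imset _ _ (fun i => enum_rank (inr i : T))); last first.
    by move=> i i' /enum_rank_inj [].
  apply: subset_leq_card; apply/subsetP => p /imsetP [i]; rewrite !inE => E ->.
  by rewrite kindT_r.
Qed.

Lemma transfer (b : R) : (3 <= #|TA| + #|TB|)%nat -> (INR (#|TA| + #|TB|) <= b)%R ->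
  ell_mu_le F mu 2 3 b.
Proof.
move=> n3 nb; have E : #|{: T}| = (#|TA| + #|TB|)%nat by rewrite card_sum.
exists #|{: T}|; split; first by rewrite E.
by apply: transfer_code; rewrite E.
Qed.

End Transfer.


Lemma card_bigcup_le (T I : finType) (P : pred I) (A : I -> {set T}) :
  (#|\bigcup_(i | P i) A i| <= \sum_(i | P i) #|A i|)%nat.
Proof.
elim/big_rec2: _ => [|i m U _ IH]; first by rewrite cards0.
by apply: leq_trans (leq_card_setU _ _).1 _; rewrite leq_add2l.
Qed.

Section Rand.
Variable F : finFieldType.
Local Notation q := #|F|.

Lemma card_fam b (S : {set 'I_b}) (X : {set F}) :
  #|[set r : {ffun 'I_b -> F} | [forall k, (k \notin S) ==> (r k \notin X)]]| =
  (expn q #|S| * expn (q - #|X|) (b - #|S|))%nat.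
Proof.
pose G (k : 'I_b) := if k \in S then (predT : pred F) else [pred v | v \notin X].
rewrite (@eq_card _ _ (finfun.family G)); last first.
  move=> r; rewrite inE; apply/forallP/familyP => H k; move: (H k); rewrite /G;
  by case: (k \in S).
rewrite card_family foldrE big_map big_enum /=.
rewrite (bigID (fun k => k \in S)) /=.
rewrite (eq_bigr (fun _ => q)); last by move=> k kS; rewrite /G kS; apply: eq_card => v.
rewrite [X in (_ * X)%nat](eq_bigr (fun _ => (q - #|X|)%nat)); last first.
  move=> k kS; rewrite /G (negbTE kS).
  have E : #|[pred v | v \notin X]| = #|~: X| by apply: eq_card => v; rewrite !inE.
  by rewrite E -(cardsC X) addKn.
rewrite !prod_nat_const; congr (_ * expn _ _)%nat.
have E : #|[pred k : 'I_b | k \notin S]| = #|~: S| by apply: eq_card => v; rewrite !inE.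
have := cardsC S; rewrite card_ord => E2.
have E3 : #|(fun i : 'I_b => i \notin S)| = #|~: S| by apply: eq_card => v; rewrite !inE.
rewrite E3; move: E2; set u := #|S|; set v := #|~: S|; move=> E2; by rewrite -E2 addKn.
Qed.


Variables (a : nat) (A0 : 'I_a -> F).
Hypothesis A0inj : injective A0.

Definition Xs (x y : F) : {set F} := [set y - x * A0 i | i : 'I_a].

Lemma card_Xs x y : x != 0 -> #|Xs x y| = a.
Proof.
move=> x0; rewrite card_imset ?card_ord // => i j /= E.
apply: A0inj; apply: (mulfI x0); apply: oppr_inj; exact: (addrI y).
Qed.

Lemma sum_bound (P : pred (F * F)) (c : nat) :
  (\sum_(xy | P xy) c <= q * q * c)%nat.
Proof.
rewrite sum_nat_const leq_mul2r -card_prod; apply/orP; right; exact: max_card.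
Qed.

Lemma not_all_bad b (Bad : {set {ffun 'I_b -> F}}) :
  (#|Bad| < expn q b)%nat -> exists r, r \notin Bad.
Proof.
move=> H; case: (pickP (fun r => r \notin Bad)) => [r rB|none]; first by exists r.
suff : (expn q b <= #|Bad|)%nat by rewrite leqNgt H.
rewrite -{1}(card_ord b) -card_ffun; apply: subset_leq_card; apply/subsetP => r _.
by move: (none r) => /= /negbFE.
Qed.

Lemma exists_good1 b : (q * q * expn (q - a) b < expn q b)%nat ->
  exists r : {ffun 'I_b -> F}, forall x y, x != 0 -> exists j, r j \in Xs x y.
Proof.
move=> H.
pose Bad := \bigcup_(xy : F * F | xy.1 != 0)
  [set r : {ffun 'I_b -> F} | [forall k, (k \notin (set0 : {set 'I_b})) ==> (r k \notin Xs xy.1 xy.2)]].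
have [r rB] : exists r, r \notin Bad.
  apply: not_all_bad; apply: leq_ltn_trans H; apply: leq_trans (card_bigcup_le _ _) _.
  apply: leq_trans (sum_bound _ _); apply: leq_sum => xy x0.
  by rewrite card_fam cards0 card_Xs // expn0 mul1n subn0.
exists r => x y x0; apply/existsP; apply: contraR rB => /existsPn NE.
apply/bigcupP; exists (x, y) => //; rewrite inE; apply/forallP => k; rewrite inE /=.
exact: NE.
Qed.

Lemma exists_good2 b : (0 < b)%nat ->
  (q * q * (b * (q * expn (q - a) (b - 1))) < expn q b)%nat ->
  exists r : {ffun 'I_b -> F}, forall x y, x != 0 -> (1 < #|[set j | r j \in Xs x y]|)%nat.
Proof.
move=> b0 H.
pose Bad := \bigcup_(xy : F * F | xy.1 != 0) \bigcup_(j : 'I_b)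
  [set r : {ffun 'I_b -> F} | [forall k, (k \notin [set j]) ==> (r k \notin Xs xy.1 xy.2)]].
have [r rB] : exists r, r \notin Bad.
  apply: not_all_bad; apply: leq_ltn_trans H; apply: leq_trans (card_bigcup_le _ _) _.
  apply: leq_trans (sum_bound _ _); apply: leq_sum => xy x0.
  apply: leq_trans (card_bigcup_le _ _) _.
  rewrite (eq_bigr (fun _ => (q * expn (q - a) (b - 1))%nat)); last first.
    by move=> j _; rewrite card_fam cards1 card_Xs // expn1.
  by rewrite sum_nat_const card_ord.
exists r => x y x0; rewrite ltnNge; apply: contra rB => /card_le1_eqP W.
set S := [set j | _] in W.
apply/bigcupP; exists (x, y) => //; apply/bigcupP.
case: (pickP (fun j => j \in S)) => [j jS|none].
  exists j => //; rewrite inE; apply/forallP => k; rewrite inE; apply/implyP => kj.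
  apply: contra kj => rk; apply/eqP; apply: (W j k) => //; by rewrite inE.
exists (Ordinal b0) => //; rewrite inE; apply/forallP => k; apply/implyP => _.
by move: (none k); rewrite inE => ->.
Qed.

End Rand.


Section Build.
Variable F : finFieldType.
Local Notation q := #|F|.

Definition embF k (H : (k <= q)%nat) (i : 'I_k) : F := enum_val (widen_ord H i).

Lemma embF_inj k H : injective (@embF k H).
Proof. by move=> i j /enum_val_inj [] /val_inj. Qed.

Variables (mu kA a b : nat) (Ha : (a <= q)%nat) (HY : (mu.+1 <= q)%nat).
Local Notation A0 := (embF Ha).
Local Notation Y := (embF HY).
Variable r : {ffun 'I_b -> F}.

Definition faB (p : 'I_kA * 'I_a) : F := A0 p.2.
Definition fbB (j : 'I_mu.+1 + 'I_b) : F := match j with inl j => Y j | inr j => r j end.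

Hypothesis Hmu : (0 < mu)%nat.
Hypothesis HG2 : (mu <= kA * (a - 1))%nat.

Lemma bG2 : exists i0, (mu <= #|[set i | faB i != faB i0]|)%nat.
Proof.
have kA0 : (0 < kA)%nat by move: HG2; case: kA Hmu => //=; rewrite mul0n; case: mu.
have a0 : (0 < a)%nat by move: HG2; case: (a) Hmu => //=; rewrite muln0; case: mu.
exists (Ordinal kA0, Ordinal a0); apply: leq_trans HG2 _.
have -> : (kA * (a - 1) = #|setX [set: 'I_kA] [set~ Ordinal a0]|)%nat.
  by rewrite cardsX cardsT cardsC1 !card_ord subn1.
apply: subset_leq_card; apply/subsetP => [[k i]]; rewrite !inE /= /faB /= => ne.
by apply: contra ne => /eqP /embF_inj ->.
Qed.

Lemma bG3 : exists j0, (mu <= #|[set j | fbB j != fbB j0]|)%nat.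
Proof.
exists (inl ord0); rewrite -[X in (X <= _)%nat](card_ord mu).
rewrite -(@card_imset _ _ (fun j : 'I_mu => inl (lift ord0 j) : 'I_mu.+1 + 'I_b)); last first.
  by move=> i j; case; rewrite !add0n => /val_inj.
apply: subset_leq_card; apply/subsetP => p /imsetP [j _ ->]; rewrite inE /=.
by apply/eqP => /embF_inj /eqP; rewrite eq_sym (negbTE (neq_lift _ _)).
Qed.

Lemma blen : (#|{: 'I_kA * 'I_a}| + #|{: 'I_mu.+1 + 'I_b}| = kA * a + (mu.+1 + b))%nat.
Proof. by rewrite card_prod card_sum !card_ord. Qed.

Lemma bn3 : (3 <= #|{: 'I_kA * 'I_a}| + #|{: 'I_mu.+1 + 'I_b}|)%nat.
Proof. rewrite blen; move: HG2 Hmu; nia. Qed.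


Lemma bG1_1 : (mu <= kA)%nat ->
  (forall x y, x != 0 -> exists j, r j \in Xs A0 x y) ->
  forall x y : F, x != 0 ->
  (mu <= #|[set ij : ('I_kA * 'I_a) * ('I_mu.+1 + 'I_b) | (x * faB ij.1 + fbB ij.2 == y)%ring]|)%nat.
Proof.
move=> HkA Hr x y x0; have [j /imsetP [i _ E]] := Hr x y x0.
apply: leq_trans HkA _; rewrite -[X in (X <= _)%nat](card_ord kA).
rewrite -(@card_imset _ _ (fun k : 'I_kA => ((k, i), inr j) : ('I_kA * 'I_a) * ('I_mu.+1 + 'I_b))); last first.
  by move=> k k' [].
apply: subset_leq_card; apply/subsetP => p /imsetP [k _ ->]; rewrite inE /= /faB /= E.
by rewrite addrC subrK.
Qed.

Lemma bG1_2 : (mu <= kA * 2)%nat ->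
  (forall x y, x != 0 -> (1 < #|[set j | r j \in Xs A0 x y]|)%nat) ->
  forall x y : F, x != 0 ->
  (mu <= #|[set ij : ('I_kA * 'I_a) * ('I_mu.+1 + 'I_b) | (x * faB ij.1 + fbB ij.2 == y)%ring]|)%nat.
Proof.
move=> HkA Hr x y x0; have /card_gt1P [j1 [j2 [j1S j2S d]]] := Hr x y x0.
move: j1S j2S; rewrite !inE => /imsetP [i1 _ E1] /imsetP [i2 _ E2].
apply: leq_trans HkA _.
have -> : (kA * 2 = #|{: 'I_kA * bool}|)%nat by rewrite card_prod card_ord card_bool.
pose g (kc : 'I_kA * bool) := ((kc.1, if kc.2 then i1 else i2), inr (if kc.2 then j1 else j2))
  : ('I_kA * 'I_a) * ('I_mu.+1 + 'I_b).
rewrite -(@card_imset _ _ g); last first.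
  move=> [k c] [k' c'] [] -> _ E; congr (_, _).
  by case: c c' E => [] [] //= E; move: d; rewrite E eqxx.
apply: subset_leq_card; apply/subsetP => p /imsetP [[k c] _ ->]; rewrite inE /= /faB /=.
by case: c => /=; rewrite ?E1 ?E2 addrC subrK.
Qed.

Lemma build_ell (B : R) :
  (forall x y : F, x != 0 ->
   (mu <= #|[set ij : ('I_kA * 'I_a) * ('I_mu.+1 + 'I_b) | (x * faB ij.1 + fbB ij.2 == y)%ring]|)%nat) ->
  (INR (kA * a + (mu.+1 + b)) <= B)%R -> ell_mu_le F mu 2 3 B.
Proof.
move=> G1 HB; apply: (@transfer F _ _ faB fbB) => //.
- exact: bG2.
- exact: bG3.
- exact: bn3.
- by rewrite blen.
Qed.

End Build.

End Code.

Module NumPart.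
Set Implicit Arguments. Unset Strict Implicit. Unset Printing Implicit Defensive.
Import Code.
Local Open Scope R_scope.

Lemma exp_pow_nat (x : R) (k : nat) : exp x ^ k = exp (INR k * x).
Proof.
induction k as [|k IH]; first by rewrite /= Rmult_0_l exp_0.
change (exp x * exp x ^ k = exp (INR k.+1 * x)).
rewrite IH -exp_plus S_INR; congr exp; ring.
Qed.

Lemma ln_le' x y : 0 < x -> x <= y -> ln x <= ln y.
Proof.
move=> x0 [xy|->]; last by right.
by left; apply: ln_increasing.
Qed.

Lemma exp1_ge2 : 2 <= exp 1.
Proof. have := exp_ineq1_le 1; lra. Qed.

Lemma exp_ge_lin t : 2 * t <= exp t.
Proof.
have -> : t = 1 + (t - 1) by ring.
rewrite exp_plus; have := exp_ineq1_le (t - 1); have := exp1_ge2.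
have := exp_pos (t - 1); nra.
Qed.

Lemma ln_le_sqrt x : 0 < x -> ln x <= sqrt x.
Proof.
move=> x0; set y := sqrt x.
have y0 : 0 < y by apply: sqrt_lt_R0.
have -> : x = y * y by rewrite /y sqrt_sqrt //; lra.
rewrite ln_mult //.
have : ln y <= y / 2.
  rewrite -[X in _ <= X](ln_exp (y / 2)); apply: ln_le' => //.
  have := exp_ge_lin (y / 2); lra.
lra.
Qed.

Lemma pow_bound (Q A : R) (k m : nat) : 0 < Q -> 0 <= A <= Q ->
  INR m * ln Q < A * INR k / Q -> Q ^ m * ((Q - A) / Q) ^ k < 1.
Proof.
move=> Q0 HA H.
have E1 : Q ^ m = exp (INR m * ln Q) by rewrite -exp_pow_nat exp_ln.
have E2 : ((Q - A) / Q) ^ k <= exp (INR k * (- (A / Q))).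
  rewrite -exp_pow_nat; apply: pow_incr; split.
    apply: Rmult_le_pos; first lra; left; exact: Rinv_0_lt_compat.
  have := exp_ineq1_le (- (A / Q)).
  have -> : (Q - A) / Q = 1 + - (A / Q) by field; lra.
  done.
rewrite E1.
apply: Rle_lt_trans (Rmult_le_compat_l _ _ _ (Rlt_le _ _ (exp_pos _)) E2) _.
rewrite -exp_plus -exp_0; apply: exp_increasing.
have : INR k * - (A / Q) = - (A * INR k / Q) by field; lra.
move=> ->; lra.
Qed.

Lemma INR_expn m n : INR (expn m n) = INR m ^ n.
Proof.
elim: n => [|n IH]; first by rewrite expn0.
by rewrite expnS -multE mult_INR IH.
Qed.

Lemma INR_mul m n : INR (m * n)%nat = INR m * INR n.
Proof. by rewrite -multE mult_INR. Qed.
Lemma INR_add m n : INR (m + n)%nat = INR m + INR n.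
Proof. by rewrite -plusE plus_INR. Qed.
Lemma INR_sub m n : (n <= m)%nat -> INR (m - n)%nat = INR m - INR n.
Proof. by move=> /leP H; rewrite -minusE minus_INR. Qed.

Lemma nat_lt_of_R m n : INR m < INR n -> (m < n)%nat.
Proof. by move=> H; apply/ltP; apply: INR_lt. Qed.

Lemma pow_split (Q A : R) (k : nat) : 0 < Q -> (Q - A) ^ k = ((Q - A) / Q) ^ k * Q ^ k.
Proof.
move=> Q0; rewrite -Rpow_mult_distr; congr pow; field; lra.
Qed.

Lemma nat_cond1 q a b : (0 < q)%nat -> (a <= q)%nat ->
  INR q ^ 2 * ((INR q - INR a) / INR q) ^ b < 1 ->
  (q * q * expn (q - a) b < expn q b)%nat.
Proof.
move=> q0 aq H; apply: nat_lt_of_R.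
rewrite !INR_mul !INR_expn INR_sub //.
have Q0 : 0 < INR q by apply: lt_0_INR; apply/ltP.
rewrite (pow_split _ _ Q0).
have P0 := pow_lt _ b Q0.
set r := ((INR q - INR a) / INR q) ^ b in H *.
set P := INR q ^ b in P0 *.
have -> : INR q * INR q * (r * P) = (INR q ^ 2 * r) * P by ring.
nra.
Qed.

Lemma nat_cond2 q a b : (0 < q)%nat -> (a <= q)%nat -> (0 < b)%nat -> (b <= q)%nat ->
  INR q ^ 3 * ((INR q - INR a) / INR q) ^ (b - 1) < 1 ->
  (q * q * (b * (q * expn (q - a) (b - 1))) < expn q b)%nat.
Proof.
move=> q0 aq b0 bq H; apply: nat_lt_of_R.
rewrite !INR_mul !INR_expn INR_sub //.
have Q0 : 0 < INR q by apply: lt_0_INR; apply/ltP.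
have Bq : INR b <= INR q by apply: le_INR; apply/leP.
have B0 : 0 <= INR b by apply: pos_INR.
rewrite (pow_split _ _ Q0).
have Eb : INR q ^ b = INR q * INR q ^ (b - 1).
  rewrite -[in LHS](subnK b0) -plusE pow_add /=; ring.
rewrite Eb.
have P0 := pow_lt _ (b - 1) Q0.
have r0 : 0 <= ((INR q - INR a) / INR q) ^ (b - 1).
  apply: pow_le; apply: Rmult_le_pos.
    have : INR a <= INR q by apply: le_INR; apply/leP.
    lra.
  left; exact: Rinv_0_lt_compat.
set r := ((INR q - INR a) / INR q) ^ (b - 1) in H r0 *.
set P := INR q ^ (b - 1) in P0 Eb *.
set Q := INR q in Q0 Bq H *.
have : Q * Q * (INR b * (Q * (r * P))) <= Q ^ 3 * r * (Q * P).
  have -> : Q ^ 3 * r * (Q * P) = Q * Q * (Q * (Q * (r * P))) by ring.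
  apply: Rmult_le_compat_l; first nra.
  apply: Rmult_le_compat_r; last exact: Bq.
  apply: Rmult_le_pos; [lra | apply: Rmult_le_pos; lra].
have QP : 0 < Q * P by apply: Rmult_lt_0_compat.
move=> Hle; apply: Rle_lt_trans Hle _.
have -> : Q * P = 1 * (Q * P) by ring.
rewrite -[X in X < _]Rmult_assoc; apply: Rmult_lt_compat_r => //. by rewrite Rmult_1_r.
Qed.

Lemma ceil_nat (x : R) : 0 <= x -> exists n : nat, x < INR n <= x + 1.
Proof.
move=> x0; have [H1 H2] := archimed x.
have up0 : (0 < up x)%Z by apply: lt_IZR; lra.
exists (Z.to_nat (up x)); rewrite INR_IZR_INZ Znat.Z2Nat.id; [lra | lia].
Qed.

Lemma ln_gt3 (x : R) : 27 < x -> 3 < ln x.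
Proof.
move=> H; rewrite -(ln_exp 3); apply: ln_increasing; first exact: exp_pos.
have -> : 3 = 1 + 1 + 1 by ring.
rewrite !exp_plus; have := exp_le_3; have := exp_pos 1; nra.
Qed.

Lemma INR_ge (n k : nat) : (k <= n)%nat -> IZR (Z.of_nat k) <= INR n.
Proof. by move=> /leP H; rewrite -INR_IZR_INZ; apply: le_INR. Qed.

Lemma W_ge (q : nat) : (26 < q)%nat ->
  3 * INR (q + 1) <= INR (q + 1) * ln (INR (q + 1)).
Proof.
move=> H; have : 27 < INR (q + 1).
  rewrite INR_add /=; have := INR_ge H; simpl; lra.
move=> H'; have := ln_gt3 H'; nra.
Qed.


Lemma nat_le_of_R m n : INR m <= INR n -> (m <= n)%nat.
Proof. by move=> H; apply/leP; apply: INR_le. Qed.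

Lemma caseABC (F : finFieldType) (mu kA : nat) (D : R) :
  (97 <= #|F|)%nat -> (2 <= mu)%nat -> (mu <= 4)%nat -> (mu <= kA * 2)%nat -> (1 <= kA)%nat ->
  (forall s, s * s = INR (#|F| + 1) * ln (INR (#|F| + 1)) -> 0 <= s ->
     INR kA * (1.25 * s + 1) + INR (mu + 1) + (2.4 * s + 2) <= 2 * D * s + 2) ->
  ell_mu_le F mu 2 3 (mcf_bound D #|F|).
Proof.
move=> q97 mu2 mu4 mukA kA1 HL.
set q := #|F| in q97 HL *.
set Q := INR q.
have Q97 : 97 <= Q by have := INR_ge q97; simpl.
have EQ1 : INR (q + 1) = Q + 1 by rewrite INR_add.
set W := INR (q + 1) * ln (INR (q + 1)) in HL *.
have W3 : 3 * (Q + 1) <= W by rewrite /W -EQ1; apply: W_ge; apply: leq_trans q97.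
have W0 : 0 <= W by lra.
set s := sqrt W.
have ss : s * s = W by apply: sqrt_sqrt.
have s0 : 0 <= s by apply: sqrt_pos.
set t := sqrt (Q + 1).
have tt : t * t = Q + 1 by apply: sqrt_sqrt; lra.
have t0 : 0 <= t by apply: sqrt_pos.
have lnt : ln (Q + 1) <= t by apply: ln_le_sqrt; lra.
have lnpos : 0 < ln (Q + 1) by have := W3; rewrite /W EQ1; nra.
have Wt : W <= (Q + 1) * t by rewrite /W EQ1; apply: Rmult_le_compat_l; lra.
have t9 : 9 <= t by nra.
have sbig : 2.4 * s + 2 <= Q.
  have h1 : 5.76 * W <= (t * t - 3) * (t * t - 3).
    have : (t * t - 3) * (t * t - 3) - 5.76 * ((Q + 1) * t) >= 0.
      rewrite -tt.
      have : t * t * (t * t - 5.76 * t - 6) + 9 >= 0 by nra.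
      nra.
    nra.
  nra.
have s32 : 3.2 < s by nra.
have [a [Aa1 Aa2]] := ceil_nat (Rmult_le_pos _ _ (ltac:(lra) : 0 <= 1.25) s0).
have [b0 [Bb1 Bb2]] := ceil_nat (Rmult_le_pos _ _ (ltac:(lra) : 0 <= 2.4) s0).
set b := (b0 + 1)%nat.
have EB : INR b = INR b0 + 1 by rewrite /b INR_add.
have Ha : (a <= q)%nat by apply: nat_le_of_R; rewrite -/Q; lra.
have Hb : (b <= q)%nat by apply: nat_le_of_R; rewrite -/Q; lra.
have HY : (mu.+1 <= q)%nat by apply: leq_trans q97; apply: leq_trans mu4 _.
have a5 : (4 < a)%nat.
  apply: nat_lt_of_R; have : INR 4 = 4 by simpl; lra.
  lra.
have [r Hr] : exists r : {ffun 'I_b -> F}, forall x y, x != GRing.zero ->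
    (1 < #|[set j | r j \in Xs (embF Ha) x y]|)%nat.
  apply: exists_good2 => //; first exact: embF_inj.
    by rewrite /b addn1.
  apply: (@nat_cond2 q a b _ Ha _ Hb); [exact: leq_trans q97 | by rewrite /b addn1 |].
  have -> : (b - 1 = b0)%nat by rewrite /b addnK.
  rewrite -/Q.
  apply: pow_bound; [lra | split; [exact: pos_INR | lra] |].
  have lnQ : ln Q <= ln (Q + 1) by apply: ln_le'; lra.
  have lnQ0 : 0 <= ln Q by rewrite -ln_1; apply: ln_le'; lra.
  have : 3 * (Q + 1) * ln (Q + 1) < INR a * INR b0.
    have : 3 * W < INR a * INR b0 by nra.
    by rewrite /W EQ1; lra.
  move=> H; have -> : INR 3 = 3 by simpl; lra.
  apply: (Rmult_lt_reg_r Q); first lra.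
  have -> : INR a * INR b0 / Q * Q = INR a * INR b0 by field; lra.
  nra.
apply: (@build_ell F mu kA a b Ha HY r).
- by apply: leq_trans mu2.
- by apply: leq_trans mu4 _; rewrite -[4%nat]mul1n leq_mul //; lia.
- exact: bG1_2.
- rewrite /mcf_bound -/W -/s INR_add INR_mul INR_add EB -addn1 INR_add.
  have := HL s ss s0.
  rewrite INR_add.
  have : INR kA * INR a <= INR kA * (1.25 * s + 1).
    apply: Rmult_le_compat_l; [exact: pos_INR | lra].
  lra.
Qed.

Lemma small_q_aux (n : nat) : 3 ^ n <= (INR n + 1) ^ 4 -> INR n <= 4 * ln (INR n + 1).
Proof.
move=> H; have n0 : 0 < INR n + 1 by have := pos_INR n; lra.
have E4 : 4 * ln (INR n + 1) = ln ((INR n + 1) ^ 4) by rewrite ln_pow //; simpl; lra.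
rewrite E4 -{1}(ln_exp (INR n)); apply: ln_le'; first exact: exp_pos.
have Ee : exp (INR n) = exp 1 ^ n by rewrite exp_pow_nat Rmult_1_r.
rewrite Ee; apply: Rle_trans H.
apply: pow_incr; split; [left; exact: exp_pos | exact: exp_le_3].
Qed.

Lemma small_q (n : nat) : (3 <= n)%nat -> (n <= 6)%nat -> INR n <= 4 * ln (INR n + 1).
Proof.
move=> h3 h6; apply: small_q_aux.
case: n h3 h6 => [|[|[|[|[|[|[|n]]]]]]] //= _ _; lra.
Qed.

Lemma ln8 : 1.5 <= ln 8.
Proof.
have e3 : exp 1.5 * exp 1.5 <= 27.
  rewrite -exp_plus.
  have -> : 1.5 + 1.5 = 1 + 1 + 1 by lra.
  rewrite !exp_plus; have := exp_le_3; have := exp_pos 1; nra.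
have e8 : exp 1.5 <= 8 by have := exp_pos 1.5; nra.
rewrite -(ln_exp 1.5); apply: ln_le' => //; exact: exp_pos.
Qed.

Lemma caseDE (F : finFieldType) (mu : nat) (D : R) :
  (3 <= #|F|)%nat -> (2 <= mu)%nat -> (mu.+1 <= #|F|)%nat -> INR (mu + 1) <= D ->
  ell_mu_le F mu 2 3 (mcf_bound D #|F|).
Proof.
move=> q3 mu2 HY HD.
set q := #|F| in q3 HY *.
set Q := INR q.
have Q3 : 3 <= Q by have := INR_ge q3; simpl.
have EQ1 : INR (q + 1) = Q + 1 by rewrite INR_add.
set W := INR (q + 1) * ln (INR (q + 1)).
have lnpos : 1 <= ln (Q + 1).
  rewrite -[X in X <= _](ln_exp 1); apply: ln_le'; first exact: exp_pos.
  have := exp_le_3; lra.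
have W0 : 0 <= W by rewrite /W EQ1; nra.
set s := sqrt W.
have ss : s * s = W by apply: sqrt_sqrt.
have s0 : 0 <= s by apply: sqrt_pos.
have Dpos : 0 <= D by have := pos_INR (mu + 1); lra.
have EM : INR (mu + 1) = INR mu + 1 by rewrite INR_add.
have mu0 : 0 <= INR mu by apply: pos_INR.
have [q6|q7] := leqP q 6.
  have Ha : (q <= q)%nat by [].
  have [r Hr] : exists r : {ffun 'I_1 -> F}, forall x y, x != GRing.zero ->
      exists j, r j \in Xs (embF Ha) x y.
    apply: exists_good1; first exact: embF_inj.
    by rewrite subnn !expn1 muln0; apply: leq_trans q3.
  apply: (@build_ell F mu mu q 1 Ha HY r).
  - by apply: leq_trans mu2.
  - by rewrite -{1}(muln1 mu) leq_mul2l; apply/orP; right; rewrite subn_gt0; apply: leq_trans q3.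
  - exact: bG1_1.
  - rewrite /mcf_bound -/W -/s INR_add INR_mul INR_add -addn1 INR_add -/Q.
    have hq : Q <= 4 * ln (Q + 1) by apply: small_q.
    have h2s : Q <= 2 * s.
      have : Q * Q <= (2 * s) * (2 * s).
        have -> : 2 * s * (2 * s) = 4 * W by rewrite -ss; ring.
        rewrite /W EQ1; nra.
      nra.
    have : (INR mu + 1) * (2 * s) <= D * (2 * s) by apply: Rmult_le_compat_r; lra.
    have muQ : INR mu <= Q by apply: le_INR; apply/leP; apply: ltnW.
    have := Rmult_le_compat_l (INR mu) _ _ mu0 h2s.
    rewrite (_ : INR 1 = 1) //; lra.
have q7' : 7 <= Q by have := INR_ge q7; simpl.
have lnb : 1.5 <= ln (Q + 1).
  apply: Rle_trans ln8 _; apply: ln_le'; lra.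
have W12 : 12 <= W by rewrite /W EQ1; nra.
have s34 : 3.42 <= s by nra.
have [a0 [Aa1 Aa2]] := ceil_nat (Rmult_le_pos _ _ (ltac:(lra) : 0 <= 1.415) s0).
set a := minn a0 q.
have Ha : (a <= q)%nat by apply: geq_minr.
have a02 : (2 <= a0)%nat.
  apply: nat_le_of_R; have : INR 2 = 2 by simpl; lra.
  nra.
have a2 : (2 <= a)%nat by rewrite leq_min a02; apply: leq_trans q7.
have Aa : INR a <= INR a0 by apply: le_INR; apply/leP; apply: geq_minl.
have [r Hr] : exists r : {ffun 'I_a0 -> F}, forall x y, x != GRing.zero ->
    exists j, r j \in Xs (embF Ha) x y.
  apply: exists_good1; first exact: embF_inj.
  have [a0q|qa0] := leqP a0 q.
    have Ea : a = a0 by rewrite /a (minn_idPl a0q).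
    apply: nat_cond1 => //; first by apply: leq_trans q3.
    rewrite -/Q Ea.
    apply: pow_bound; [lra | split; [exact: pos_INR | ] |].
      by rewrite -Ea; apply: le_INR; apply/leP.
    have lnQ : ln Q <= ln (Q + 1) by apply: ln_le'; lra.
    have lnQ0 : 0 <= ln Q by rewrite -ln_1; apply: ln_le'; lra.
    have : 2 * (Q + 1) * ln (Q + 1) < INR a0 * INR a0.
      have : 2 * W < INR a0 * INR a0 by nra.
      by rewrite /W EQ1; lra.
    move=> H; have -> : INR 2 = 2 by simpl; lra.
    apply: (Rmult_lt_reg_r Q); first lra.
    have -> : INR a0 * INR a0 / Q * Q = INR a0 * INR a0 by field; lra.
    nra.
  have Ea : a = q by rewrite /a (minn_idPr (ltnW qa0)).
  rewrite Ea subnn exp0n ?muln0 ?expn_gt0; first by rewrite (leq_trans _ q3).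
  by apply: leq_trans a02.
apply: (@build_ell F mu mu a a0 Ha HY r).
- by apply: leq_trans mu2.
- by rewrite -{1}(muln1 mu) leq_mul2l; apply/orP; right; rewrite subn_gt0.
- exact: bG1_1.
- rewrite /mcf_bound -/W -/s INR_add INR_mul INR_add -addn1 INR_add.
  have : INR mu * INR a <= INR mu * (1.415 * s + 1) by apply: Rmult_le_compat_l; lra.
  have : (INR mu + 1) * (2 * s) <= D * (2 * s) by apply: Rmult_le_compat_r; lra.
  simpl; nra.
Qed.

End NumPart.

Import Code NumPart.


Section Final.
Local Open Scope R_scope.

Lemma W_ge' (q : nat) (s : R) : (26 < q)%nat -> s * s = INR (q + 1) * ln (INR (q + 1)) -> 0 <= s ->
  3 * (INR q + 1) <= s * s.
Proof.
move=> H E s0; rewrite E; have := W_ge H; rewrite INR_add; simpl; lra.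
Qed.

Lemma sq_ge (s c : R) : 0 <= s -> 0 <= c -> c * c <= s * s -> c <= s.
Proof. move=> s0 c0 H; nra. Qed.

Lemma mcf_e (q mu : nat) :
  INR mu <= / 2 * ((1 - mcf_delta q) * INR q - mcf_delta q + 1) + 1 ->
  (3 <= q)%nat -> (2 * mu <= q + 2)%nat /\ True.
Proof.
rewrite /mcf_delta => He q3.
have Q3 : 3 <= INR q by have := INR_ge q3; simpl.
set Q := INR q in Q3 He.
have EQ : INR (q + 1) = Q + 1 by rewrite INR_add.
rewrite EQ in He.
have lnpos : 0 < ln (Q + 1) by rewrite -ln_1; apply: ln_increasing; lra.
have lnle : ln (Q + 1) <= Q + 1.
  have := exp_ineq1_le (ln (Q + 1)); rewrite exp_ln; lra.
set W := (Q + 1) * ln (Q + 1) in He.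
have W0 : 0 < W by rewrite /W; nra.
set s := sqrt W in He.
have s0 : 0 < s by apply: sqrt_lt_R0.
have ss : s * s = W by apply: sqrt_sqrt; lra.
have sQ : s <= Q + 1 by apply: sq_ge; [lra | lra | rewrite ss /W; nra].
have key : (1 - / s) * Q - / s + 1 <= Q.
  have -> : (1 - / s) * Q - / s + 1 = (Q + 1) - (Q + 1) / s by field; lra.
  have : 1 <= (Q + 1) / s.
    apply: (Rmult_le_reg_r s) => //; rewrite /Rdiv Rmult_assoc Rinv_l; lra.
  lra.
split => //; apply: nat_le_of_R; rewrite INR_mul INR_add -/Q; simpl; lra.
Qed.

End Final.

Theorem corollary2 (F : finFieldType) (mu : nat) (D : R) :
  (2 <= mu)%N ->
  ((D = (24 / 10)%R /\ mu = 2%N /\ (97 <= #|F|)%N) \/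
   (D = (26 / 10)%R /\ mu = 3%N /\ (181 <= #|F|)%N) \/
   (D = (28 / 10)%R /\ mu = 4%N /\ (125 <= #|F|)%N) \/
   (D = INR (mu + 1) /\ (INR mu <= sqrt (INR #|F|))%R /\ (4 <= #|F|)%N) \/
   (D = (2 * INR mu - 1)%R /\
    (INR mu <= / 2 * ((1 - mcf_delta #|F|) * INR #|F| - mcf_delta #|F| + 1) + 1)%R /\
    (3 <= #|F|)%N)) ->
  ell_mu_le F mu 2 3 (mcf_bound D #|F|).
Proof.
move=> mu2 [[-> [-> q97]]|[[-> [-> q181]]|[[-> [-> q125]]|[[-> [Hs q4]]|[-> [He q3]]]]]].
- apply: (@caseABC F 2 1) => // s Es s0.
  have := W_ge' _ _ (leq_trans (isT : (26 < 97)%nat) q97) Es s0.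
  have := INR_ge q97; simpl => h1 h2.
  have : (4 <= s)%R by apply: sq_ge; lra.
  lra.
- apply: (@caseABC F 3 2) => //; first by apply: leq_trans q181.
  move=> s Es s0.
  have := W_ge' _ _ (leq_trans (isT : (26 < 181)%nat) q181) Es s0.
  have := INR_ge q181; simpl => h1 h2.
  have : (20 <= s)%R by apply: sq_ge; lra.
  lra.
- apply: (@caseABC F 4 2) => //; first by apply: leq_trans q125.
  move=> s Es s0.
  have := W_ge' _ _ (leq_trans (isT : (26 < 125)%nat) q125) Es s0.
  have := INR_ge q125; simpl => h1 h2.
  have : (10 <= s)%R by apply: sq_ge; lra.
  lra.
- apply: caseDE => //; first by apply: leq_trans q4.
  + have Q0 : (0 <= INR #|F|)%R by apply: pos_INR.
    have m0 : (0 <= INR mu)%R by apply: pos_INR.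
    have := sqrt_sqrt _ Q0; have := sqrt_pos (INR #|F|) => hs hss.
    have : (INR mu * INR mu <= INR #|F|)%R by nra.
    rewrite -INR_mul => /nat_le_of_R H.
    by apply: leq_trans H; move: mu2; clear; nia.
  + by right.
- have [H2 H3] := mcf_e _ _ He q3.
  apply: caseDE => //.
    by move: H2 q3 mu2; clear; lia.
  rewrite INR_add; simpl; have := INR_ge mu2; simpl; lra.
Qed.
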